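(* For all integers $m,n$ with $1\le m\le n$ and $n\ge 2$, \[mn-\frac{m^2(m-1)}{n-1}\ \le\ \operatorname{scp}(K_n-K_m)\ \le\ (2m-1)(n-m)+1.\]
   Context: $K_n-K_m$ denotes the graph obtained from the complete graph $K_n$ by deleting all edges (but no vertices) among a fixed set of $m$ of its vertices. A clique partition of a graph $G$ is a family $\mathcal{C}$ of cliques of $G$ such that every edge has both endpoints in exactly one member of $\mathcal{C}$; $\operatorname{scp}(G)$ is the minimum of $\sum_{C\in\mathcal{C}}|C|$ over all clique partitions $\mathcal{C}$ of $G$. *)

(* Defs.v *)
From mathcomp Require Import all_boot all_order all_algebra.
Set Implicit Arguments. Unset Strict Implicit. Unset Printing Implicit Defensive.

(* The graph K_n - K_m on vertex set 'I_n: the fixed set of m vertices whose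
   mutual edges are deleted is {0, ..., m-1}. *)
Definition KnKm_adj (n m : nat) (x y : 'I_n) : bool :=
  (x != y) && ~~ ((x < m) && (y < m)).

Definition is_clique (n m : nat) (C : {set 'I_n}) : bool :=
  [forall x in C, forall y in C, (x != y) ==> KnKm_adj m x y].

Definition is_clique_partition (n m : nat) (P : {set {set 'I_n}}) : bool :=
  [forall C in P, is_clique m C] &&
  [forall x, forall y, KnKm_adj m x y ==>
     (#|[set C in P | (x \in C) && (y \in C)]| == 1)].

Definition cp_weight (n : nat) (P : {set {set 'I_n}}) : nat :=
  \sum_(C in P) #|C|.

Definition scp_pred (n m : nat) : pred nat :=
  fun k => [exists P : {set {set 'I_n}}, is_clique_partition m P && (cp_weight P == k)].

Definition edge_family (n m : nat) : {set {set 'I_n}} :=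
  [set [set p.1; p.2] | p in [set q : 'I_n * 'I_n | KnKm_adj m q.1 q.2]].

Lemma KnKm_adj_sym n m (x y : 'I_n) : KnKm_adj m x y = KnKm_adj m y x.
Proof. by rewrite /KnKm_adj eq_sym [(y < m) && _]andbC. Qed.

Lemma edge_family_cp n m : is_clique_partition m (edge_family n m).
Proof.
apply/andP; split.
  apply/forall_inP => C /imsetP [[a b]]; rewrite inE /= => Hab ->.
  apply/forall_inP => x; rewrite !inE => Hx; apply/forall_inP => y.
  rewrite !inE => Hy; apply/implyP.
  move: Hx Hy; case/orP => /eqP ->; case/orP => /eqP ->; rewrite ?eqxx //= => _.
  by rewrite KnKm_adj_sym.
apply/forallP => x; apply/forallP => y; apply/implyP => Hxy.
have Hne : x != y by case/andP: Hxy.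
suff -> : [set C in edge_family n m | (x \in C) && (y \in C)] = [set [set x; y]].
  by rewrite cards1.
apply/setP => C; rewrite !inE; apply/idP/idP.
  case/andP => /imsetP [[a b]]; rewrite inE /= => Hab -> /andP [].
  rewrite !inE => Hx Hy; apply/eqP/setP => z; rewrite !inE.
  case/orP: Hx => /eqP Hx; case/orP: Hy => /eqP Hy; subst;
    rewrite ?eqxx in Hne; try done.
  by rewrite orbC.
move/eqP => ->; rewrite !inE !eqxx orbT andbT.
rewrite orTb andbT; apply/imsetP; exists (x, y) => //; by rewrite inE.
Qed.

Lemma scp_exists n m : exists k, scp_pred n m k.
Proof.
exists (cp_weight (edge_family n m)); apply/existsP; exists (edge_family n m).
by rewrite edge_family_cp eqxx.
Qed.

Definition scp_KnKm (n m : nat) : nat := ex_minn (@scp_exists n m).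

(* Main.v *)
Require Import Defs.
From mathcomp Require Import all_boot all_order all_algebra.
From mathcomp Require Import zify ring.
Import Order.TTheory GRing.Theory Num.Theory.
Set Implicit Arguments. Unset Strict Implicit. Unset Printing Implicit Defensive.

Lemma card_cond (T : finType) (S : {set T}) (Q : pred T) :
  #|[set p in S | Q p]| = \sum_(p in S) (Q p : nat).
Proof.
rewrite -sum1_card big_mkcond [RHS]big_mkcond /=; apply: eq_bigr => p _.
by rewrite inE; case: (p \in S); case: (Q p).
Qed.

Lemma sum_pairs n m (P : {set {set 'I_n}}) (E0 : {set 'I_n * 'I_n}) :
  is_clique_partition m P -> (forall p, p \in E0 -> KnKm_adj m p.1 p.2) ->
  \sum_(C in P) #|[set p in E0 | (p.1 \in C) && (p.2 \in C)]| = #|E0|.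
Proof.
move=> /andP[_ /forallP HP] HE.
under eq_bigr => C _ do rewrite card_cond.
rewrite exchange_big /= -sum1_card; apply: eq_bigr => p Hp.
rewrite -card_cond.
by move: (HP p.1) => /forallP /(_ p.2) /implyP /(_ (HE p Hp)) /eqP.
Qed.

Lemma card_diag (T : finType) (X : {set T}) :
  #|[set p : T * T | (p.1 \in X) && (p.2 \in X) && (p.1 != p.2)]| = #|X| * #|X| - #|X|.
Proof.
have H := cardsID [set p : T * T | p.1 == p.2] (setX X X).
have E1 : setX X X :&: [set p : T * T | p.1 == p.2] = [set (x, x) | x in X].
  apply/setP => [[a b]]; rewrite !inE /=; apply/idP/imsetP.
    by case/andP => /andP [ha _] /eqP <-; exists a.
  by case=> x hx [-> ->]; rewrite hx eqxx.
have E2 : [set p : T * T | (p.1 \in X) && (p.2 \in X) && (p.1 != p.2)] =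
   setX X X :\: [set p : T * T | p.1 == p.2].
  by apply/setP => p; rewrite !inE andbC.
rewrite E1 card_imset in H; last by move=> x y [].
rewrite cardsX in H.
rewrite E2. lia.
Qed.

Lemma card_lt (n m : nat) : m <= n -> #|[set v : 'I_n | v < m]| = m.
Proof.
move=> hmn.
have -> : [set v : 'I_n | v < m] = [set widen_ord hmn i | i : 'I_m].
  apply/setP => v; rewrite inE; apply/idP/imsetP.
    by move=> hv; exists (Ordinal hv) => //; apply: val_inj.
  by case=> i _ ->; rewrite /= ltn_ord.
rewrite card_imset ?card_ord //.
by move=> i j /(congr1 val) /= /val_inj.
Qed.

Lemma clique_A n m (C : {set 'I_n}) : is_clique m C ->
  #|C :&: [set v : 'I_n | v < m]| <= 1.
Proof.
move=> HC; rewrite leqNgt; apply/negP => /card_gt1P [x [y [hx hy hxy]]].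
move: hx hy; rewrite !inE => /andP [hxC hxm] /andP [hyC hym].
move: HC => /forall_inP /(_ x hxC) /forall_inP /(_ y hyC) /implyP /(_ hxy).
by rewrite /KnKm_adj hxm hym andbF.
Qed.

Lemma lower_comb n m (P : {set {set 'I_n}}) : m <= n -> is_clique_partition m P ->
  let A := [set v : 'I_n | v < m] in
  let B := ~: A in
  [/\ \sum_(C in P) #|C :&: A| * #|C :&: B| = m * (n - m),
      \sum_(C in P) (#|C :&: B| * #|C :&: B| - #|C :&: B|) = (n-m)*(n-m) - (n-m),
      forall C : {set 'I_n}, C \in P -> #|C :&: A| <= 1 &
      forall C : {set 'I_n}, #|C| = #|C :&: A| + #|C :&: B| ].
Proof.
move=> hmn HP A B.
have cA : #|A| = m by apply: card_lt.
have cB : #|B| = n - m by have := cardsC A; rewrite cA card_ord /B; lia.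
split.
- rewrite -cB -cA -cardsX -(sum_pairs (E0 := setX A B) HP).
    apply: eq_bigr => C _; rewrite -cardsX; apply: eq_card => -[a b]; rewrite !inE /=.
    by case: (a \in C); case: (b \in C); case: (nat_of_ord a < m); case: (nat_of_ord b < m).
  move=> [a b]; rewrite !inE /= => /andP [ha hb].
  rewrite /KnKm_adj ha /= (negbTE hb) andbT.
  by apply/eqP => eab; move: ha; rewrite eab (negbTE hb).
- rewrite -cB -card_diag -(sum_pairs (E0 := [set p : 'I_n * 'I_n | (p.1 \in B) && (p.2 \in B) && (p.1 != p.2)]) HP).
    apply: eq_bigr => C _; rewrite -card_diag; apply: eq_card => -[a b]; rewrite !inE /=.
    by case: (a \in C); case: (b \in C); case: (nat_of_ord a < m); case: (nat_of_ord b < m); case: (a != b).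
  move=> [a b]; rewrite !inE /= => /andP [/andP [ha hb] hab].
  by rewrite /KnKm_adj hab /= (negbTE ha).
- move=> C HC; apply: clique_A.
  by move: HP => /andP [/forall_inP H _]; apply: H.
- by move=> C; rewrite -(cardsID A C) setDE.
Qed.

Lemma ptw (k m x y : nat) : y <= 1 ->
  2 * k * m * (y * x) <= k ^ 2 * y + m ^ 2 * (x * x - x) + m ^ 2 * (y * x).
Proof.
move=> hy.
have [->|->] : y = 0 \/ y = 1 by lia.
  by rewrite !(mul0n, muln0).
have e : m ^ 2 * (x * x - x) + m ^ 2 * (1 * x) = (m * x) ^ 2.
  rewrite mul1n -mulnDr subnK; last by case: x => // x'; rewrite leq_pmulr.
  rewrite expnMn; ring.
rewrite muln1 -addnA e -mulnA mul1n mulnA.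
have := nat_Cauchy k (m * x); case => H _; rewrite !mulnA in H; exact: H.
Qed.

Lemma arith1 (k m N d Y W : nat) : k = d + m ->
  2 * k * m * (m * N) <= k^2 * Y + m^2 * (N * d) + m^2 * (m * N) ->
  Y * k * k + m * N * k * k <= W * k * k ->
  m * N * (k+m) * k <= W * k * k.
Proof.
move=> ek H1 H2.
have e1 : m * N * (k+m) * k = m * N * k * k + m * m * N * k by ring.
have e2 : 2 * k * m * (m * N) = m * m * N * k + (m^2 * (N * d) + m^2 * (m * N)) by rewrite ek; ring.
have e3 : k^2 * Y = Y * k * k by ring.
rewrite e1; rewrite e2 e3 in H1.
move: H1 H2; set a := m * m * N * k; set b := m^2 * (N * d) + m^2 * (m * N); set y := Y * k * k; set z := m * N * k * k.
lia.
Qed.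

Lemma arith (n m Y W : nat) : 1 <= m -> m <= n -> 2 <= n ->
  2 * (n-1) * m * (m * (n-m)) <= (n-1)^2 * Y + m^2 * ((n-m) * (n-m)-(n-m)) + m^2 * (m * (n-m)) ->
  Y + m * (n-m) <= W ->
  m * n * (n-1) <= W * (n-1) + m^2 * (m-1).
Proof.
move=> h1 h2 h3 H1 H2.
case: (ltnP m n) => hmn; last first.
  have -> : n = m by apply/eqP; rewrite eqn_leq h2 hmn.
  rewrite -mulnn; apply: leq_addl.
have [d ed] : exists d, n - m = d.+1 by exists (n - m).-1; rewrite prednK // subn_gt0.
have [k ek] : exists k, n - 1 = k by exists (n-1).
have ekd : k = d + m by lia.
have en : n = d.+1 + m by lia.
rewrite ed in H1 H2. rewrite ek in H1  * .
have E : d.+1  *  d.+1 - d.+1 = d.+1  *  d by rewrite mulnS addKn.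
rewrite E in H1.
have H2' : Y * k * k + m * d.+1 * k * k <= W * k * k.
  by move: (leq_mul (leq_mul H2 (leqnn k)) (leqnn k)); rewrite !mulnDl.
have H := @arith1 k m d.+1 d Y W ekd H1 H2'.
have kpos : 0 < k by lia.
rewrite leq_pmul2r // in H.
have e1 : m * n * k = m * d.+1 * k + m * m * k by rewrite en; ring.
have e2 : m * d.+1 * (k+m) = m * d.+1 * k + m * m * d.+1 by ring.
have e3 : m * m * k = m * m * d.+1 + m^2 * (m-1).
  have -> : k = d.+1 + (m-1) by lia.
  rewrite mulnDr; congr (_ + _); ring.
rewrite e1 e3; rewrite e2 in H.
move: H; set a := m * d.+1 * k; set b := m * m * d.+1; set c := m^2 * (m-1); set w := W * k.
lia.
Qed.

Lemma lower n m (P : {set {set 'I_n}}) : 1 <= m -> m <= n -> 2 <= n ->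
  is_clique_partition m P ->
  m * n * (n - 1) <= cp_weight P * (n - 1) + m ^ 2 * (m - 1).
Proof.
move=> h1 h2 h3 HP.
move: (lower_comb h2 HP) => /= [S1 S2 Hy Hc].
apply: (@arith n m (\sum_(C in P) #|C :&: [set v : 'I_n | v < m]|) (cp_weight P) h1 h2 h3).
  rewrite -S1 -S2 !big_distrr -!big_split /=.
  by apply: leq_sum => C HC; apply: ptw; apply: Hy.
rewrite -S1 -big_split /cp_weight; apply: leq_sum => C HC.
rewrite [#|C|]Hc /= leq_add2l.
have := Hy C HC; case: #|_| => [|[|]] //= _; by rewrite ?mul1n.
Qed.

Definition A1 n m : {set 'I_n} := [set a : 'I_n | (0 < a) && (a < m)].
Definition Bs n m : {set 'I_n} := [set b : 'I_n | m <= b].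
Definition K0 n m : {set 'I_n} := [set v : 'I_n | (m <= v) || (v == 0 :> nat)].
Definition Pairs n m : {set {set 'I_n}} :=
  [set [set p.1; p.2] | p in setX (A1 n m) (Bs n m)].
Definition Pc n m := K0 n m |: Pairs n m.

Lemma mem_Pairs n m C : reflect
  (exists a b : 'I_n, [/\ (0 < a) && (a < m), m <= b & C = [set a; b]])
  (C \in Pairs n m).
Proof.
apply: (iffP imsetP).
  by case=> [[a b]]; rewrite !inE /= => /andP [ha hb] ->; exists a, b.
by case=> a [b [ha hb ->]]; exists (a, b) => //; rewrite !inE /= ha hb.
Qed.

Lemma K0_notin n m : 1 <= m -> K0 n m \notin Pairs n m.
Proof.
move=> hm; apply/negP => /mem_Pairs [a [b [ha hb E]]].
have : a \in K0 n m by rewrite E !inE eqxx.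
rewrite inE; case/andP: ha => ha1 ha2.
by rewrite leqNgt ha2 /= => /eqP a0; rewrite a0 in ha1.
Qed.

Lemma Pc_clique n m C : C \in Pc n m -> is_clique m C.
Proof.
rewrite !inE => /orP [/eqP -> | /mem_Pairs [a [b [ha hb ->]]]].
  apply/forall_inP => x; rewrite inE => hx; apply/forall_inP => y; rewrite inE => hy.
  apply/implyP => hxy; rewrite /KnKm_adj hxy /=.
  apply/negP => /andP [xm ym].
  move: hx hy; rewrite leqNgt xm leqNgt ym /= => /eqP hx /eqP hy.
  by move: hxy; rewrite -(inj_eq val_inj) /= hx hy.
case/andP: ha => ha1 ha2.
apply/forall_inP => x; rewrite !inE => hx; apply/forall_inP => y; rewrite !inE => hy.
apply/implyP; case/orP: hx => /eqP ->; case/orP: hy => /eqP ->; rewrite ?eqxx //= => hxy;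
  by rewrite /KnKm_adj hxy /= [b < m]ltnNge hb ?andbF.
Qed.

Lemma count_A1 n m (x y : 'I_n) : (0 < x) && (x < m) -> KnKm_adj m x y ->
  [set C in Pc n m | (x \in C) && (y \in C)] = [set [set x; y]].
Proof.
move=> /andP [hx1 hx2] hadj.
have hy : m <= y by move: hadj; rewrite /KnKm_adj hx2 /= -leqNgt => /andP [_ ->].
have hxy : x != y by case/andP: hadj.
apply/setP => C; rewrite !inE; apply/idP/idP.
  case/andP => /orP [/eqP -> | /mem_Pairs [a [b [ha hb ->]]]].
    by rewrite !inE leqNgt hx2 /= => /andP [/eqP x0]; rewrite x0 in hx1.
  rewrite !inE; case/andP: ha => ha1 ha2.
  case/andP => /orP [] /eqP ex /orP [] /eqP ey.
  all: try first [by rewrite ex ey | by rewrite ey ex eqxx in hxy | by move: hx2; rewrite ex ltnNge hb].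
have hP : [set x; y] \in Pairs n m.
  by apply/mem_Pairs; exists x, y; split=> //; rewrite hx1.
by move/eqP => ->; rewrite hP orbT !inE !eqxx ?orbT.
Qed.

Lemma count_K0 n m (x y : 'I_n) : ~~ ((0 < x) && (x < m)) -> ~~ ((0 < y) && (y < m)) ->
  KnKm_adj m x y ->
  [set C in Pc n m | (x \in C) && (y \in C)] = [set K0 n m].
Proof.
move=> hx hy hadj.
have hxy : x != y by case/andP: hadj.
have inK (z : 'I_n) : ~~ ((0 < z) && (z < m)) -> z \in K0 n m.
  by rewrite inE negb_and -!leqNgt leqn0 orbC.
apply/setP => C; rewrite !inE; apply/idP/idP.
  case/andP => /orP [// | /mem_Pairs [a [b [ha hb ->]]]].
  rewrite !inE.
  case/andP => /orP [] /eqP ex /orP [] /eqP ey.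
  - by rewrite ey ex eqxx in hxy.
  - by rewrite ex ha in hx.
  - by rewrite ey ha in hy.
  - by rewrite ey ex eqxx in hxy.
move/eqP => ->; rewrite !eqxx /=.
by rewrite (inK x hx) (inK y hy).
Qed.

Lemma Pc_cp n m : 1 <= m -> is_clique_partition m (Pc n m).
Proof.
move=> hm; apply/andP; split.
  by apply/forall_inP => C; apply: Pc_clique.
apply/forallP => x; apply/forallP => y; apply/implyP => hadj.
case hx : ((0 < x) && (x < m)).
  by rewrite (count_A1 hx hadj) cards1.
case hy : ((0 < y) && (y < m)).
  have -> : [set C in Pc n m | (x \in C) && (y \in C)] =
            [set C in Pc n m | (y \in C) && (x \in C)].
    by apply/setP => C; rewrite !inE [(x \in C) && _]andbC.
  rewrite KnKm_adj_sym in hadj.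
  rewrite (count_A1 hy hadj) cards1 //.
by rewrite (count_K0 (negbT hx) (negbT hy) hadj) cards1.
Qed.

Lemma Pc_weight n m : 1 <= m -> m <= n -> 2 <= n ->
  cp_weight (Pc n m) = (2 * m - 1) * (n - m) + 1.
Proof.
move=> h1 h2 h3.
have n0 : 0 < n by apply: leq_trans h3.
pose x0 : 'I_n := Ordinal n0.
have cL : #|[set v : 'I_n | v < m]| = m by apply: card_lt.
have cB : #|Bs n m| = n - m.
  have -> : Bs n m = ~: [set v : 'I_n | v < m] by apply/setP => v; rewrite !inE leqNgt.
  by have := cardsC [set v : 'I_n | v < m]; rewrite cL card_ord => /(congr1 (subn^~ m)); rewrite addKn.
have cA : #|A1 n m| = m - 1.
  have E : [set v : 'I_n | v < m] = x0 |: A1 n m.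
    apply/setP => v; rewrite !inE -(inj_eq val_inj) /=.
    by case: (nat_of_ord v) => [|k] //=; rewrite h1.
  have nx : x0 \notin A1 n m by rewrite inE.
  by move: cL; rewrite E cardsU1 nx /= => e; rewrite -[X in _ = X - 1]e add1n subn1.
have cK : #|K0 n m| = n - m + 1.
  have E : K0 n m = x0 |: Bs n m.
    by apply/setP => v; rewrite !inE -(inj_eq val_inj) /= orbC.
  have nx : x0 \notin Bs n m by rewrite inE /= -ltnNge.
  by rewrite E cardsU1 nx cB addnC.
have cP : #|Pairs n m| = (m - 1) * (n - m).
  rewrite /Pairs card_in_imset ?cardsX ?cA ?cB //.
  move=> [a b] [c d]; rewrite !inE /= => /andP [/andP [ha1 ha2] hb] /andP [/andP [hc1 hc2] hd] E.
  have hac : a \in [set c; d] by rewrite -E !inE eqxx.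
  have hbd : b \in [set c; d] by rewrite -E !inE eqxx orbT.
  move: hac hbd; rewrite !inE => /orP [] /eqP ac /orP [] /eqP bd.
  - by move: hb; rewrite bd leqNgt hc2.
  - by rewrite ac bd.
  - by move: ha2; rewrite ac ltnNge hd.
  - by move: ha2; rewrite ac ltnNge hd.
rewrite /cp_weight /Pc big_setU1 /=; last by apply: K0_notin.
have -> : \sum_(C in Pairs n m) #|C| = \sum_(C in Pairs n m) 2.
  apply: eq_bigr => C /mem_Pairs [a [b [/andP [_ ha] hb ->]]].
  rewrite cards2; case: eqP => // eab; by move: ha; rewrite eab ltnNge hb.
rewrite sum_nat_const cP cK.
have [c ->] : exists c, m = c.+1 by exists m.-1; rewrite prednK.
rewrite subn1 /= -mulnA mulSn.
have -> : 2 * c.+1 - 1 = c + c.+1 by lia.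
rewrite mulnDl; lia.
Qed.

Theorem mainTheorem7 (n m : nat) (hm1 : (1 <= m)%N) (hmn : (m <= n)%N) (hn : (2 <= n)%N) :
  ((m * n)%:R - (m ^ 2 * (m - 1))%:R / (n - 1)%:R <= (scp_KnKm n m)%:R :> rat)%R
  /\ (scp_KnKm n m <= (2 * m - 1) * (n - m) + 1)%N.
Proof.
split.
  rewrite /scp_KnKm; case: ex_minnP => k /existsP [P /andP [HP /eqP HW]] _.
  have hd : (0 < (n - 1)%:R :> rat)%R by rewrite ltr0n subn_gt0.
  rewrite lerBlDr -(ler_pM2r hd) mulrDl divfK ?(gt_eqF hd) //.
  rewrite -!natrM -natrD ler_nat -HW.
  exact: lower.
rewrite /scp_KnKm; case: ex_minnP => k _ hmin; apply: hmin.
apply/existsP; exists (Pc n m); by rewrite Pc_cp // Pc_weight // eqxx.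
Qed.
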